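(* Let $k$ be an étale cubic algebra over $\mathbb{Q}$ and let $\mathcal{O}\subset\mathcal{O}_k$ be a cubic ring such that the index $f=(\mathcal{O}_k:\mathcal{O})$ is square free. Then there exists a normalized basis $\{1,\omega,\theta\}$ of $\mathcal{O}_k$ with $\omega,\theta\in k^\times$ (invertible elements of $k$) such that $\mathcal{O}=[1,f\omega,\theta]$ and $[f,f\omega,\theta]$ is the conductor of $\mathcal{O}$.
   Context: An étale cubic algebra is a direct sum of number fields of total degree $3$ over $\mathbb{Q}$; $\mathcal{O}_k$ is its maximal order. A $\mathbb{Z}$-basis $\{1,\omega,\theta\}$ of a cubic ring is normalized if $\omega\theta\in\mathbb{Z}$. $[\beta_1,\beta_2,\beta_3]$ denotes the $\mathbb{Z}$-span. The conductor of $\mathcal{O}$ is the largest $\mathcal{O}_k$-ideal contained in $\mathcal{O}$. *)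

(* Defs.v *)
From mathcomp Require Import all_boot all_order all_algebra all_field.
Set Implicit Arguments. Unset Strict Implicit. Unset Printing Implicit Defensive.
Import Order.TTheory GRing.Theory Num.Theory.
Local Open Scope ring_scope.

Section CubicDefs.
Variable k : falgType rat.

Definition etale_cubic : Prop :=
  [/\ (forall x y : k, x * y = y * x),
      \dim (fullv : {vspace k}) = 3%N
    & (forall (x : k) (n : nat), x ^+ n = 0 -> x = 0)].

Definition kset := k -> Prop.

Definition subset_k (A B : kset) : Prop := forall x, A x -> B x.
Definition eq_kset (A B : kset) : Prop := forall x, A x <-> B x.

Definition zspan3 (b1 b2 b3 : k) : kset :=
  fun x => exists a1 a2 a3 : int, x = a1%:~R * b1 + a2%:~R * b2 + a3%:~R * b3.

Definition zfree3 (b1 b2 b3 : k) : Prop :=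
  forall a1 a2 a3 : int, a1%:~R * b1 + a2%:~R * b2 + a3%:~R * b3 = 0 ->
    [/\ a1 = 0, a2 = 0 & a3 = 0].

Definition zbasis3 (A : kset) (b1 b2 b3 : k) : Prop :=
  eq_kset A (zspan3 b1 b2 b3) /\ zfree3 b1 b2 b3.

Definition maximal_order : kset :=
  fun x => exists p : {poly int}, p \is monic /\
             (map_poly (fun z : int => z%:~R : k) p).[x] = 0.

Definition cubic_ring (O : kset) : Prop :=
  [/\ O 1, (forall x y, O x -> O y -> O (x - y)),
      (forall x y, O x -> O y -> O (x * y))
    & exists b1 b2 b3, zbasis3 O b1 b2 b3].

Definition index_is (N M : kset) (n : nat) : Prop :=
  exists r : 'I_n -> k, (forall i, N (r i)) /\
    (forall x, N x -> exists! i, M (x - r i)).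

Definition ideal_of (R I : kset) : Prop :=
  [/\ subset_k I R, I 0, (forall x y, I x -> I y -> I (x - y))
    & (forall r x, R r -> I x -> I (r * x))].

Definition is_conductor (R O C : kset) : Prop :=
  [/\ ideal_of R C, subset_k C O
    & forall I, ideal_of R I -> subset_k I O -> subset_k I C].

Definition normalized_basis (A : kset) (w t : k) : Prop :=
  zbasis3 A 1 w t /\ exists n : int, w * t = n%:~R.

End CubicDefs.

Definition squarefree (n : nat) : Prop :=
  (0 < n)%N /\ forall p, prime p -> ~~ (p * p %| n)%N.

(* Main.v *)
Require Import Defs.
From HB Require Import structures.
From mathcomp Require Import all_boot all_order all_algebra all_field all_fingroup all_solvable.
From mathcomp Require Import ring zify.
Set Implicit Arguments. Unset Strict Implicit. Unset Printing Implicit Defensive.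
Import GRing.Theory Num.Theory FinRing.Theory.
Local Open Scope ring_scope.

Section Gen.
Variable R : comNzRingType.

Definition lc (u v w : R) (a b c : int) : R := a%:~R * u + b%:~R * v + c%:~R * w.
Definition zs3 (u v w : R) (x : R) := exists a b c : int, x = lc u v w a b c.
Definition zf3 (u v w : R) := forall a b c : int, lc u v w a b c = 0 -> [/\ a = 0, b = 0 & c = 0].
Definition zb3 (A : R -> Prop) u v w := (forall x, A x <-> zs3 u v w x) /\ zf3 u v w.
Definition intg (x : R) := exists p : {poly int}, p \is monic /\
   (map_poly (fun z : int => z%:~R : R) p).[x] = 0.

Lemma lcB u v w a b c a' b' c' :
  lc u v w a b c - lc u v w a' b' c' = lc u v w (a - a') (b - b') (c - c').
Proof. rewrite /lc; ring. Qed.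

Lemma lc_uniq u v w a b c a' b' c' : zf3 u v w ->
  lc u v w a b c = lc u v w a' b' c' -> [/\ a = a', b = b' & c = c'].
Proof.
move=> fr e; have /fr[] : lc u v w (a - a') (b - b') (c - c') = 0 by rewrite -lcB e subrr.
by move=> /eqP; rewrite subr_eq0 => /eqP -> /eqP; rewrite subr_eq0 => /eqP -> /eqP; rewrite subr_eq0 => /eqP ->.
Qed.

Lemma zb3_E3 A x y z (p q r s : int) : p * s - q * r = 1 -> zb3 A x y z ->
  zb3 A (p%:~R * x + q%:~R * y) (r%:~R * x + s%:~R * y) z.
Proof.
move=> hd [hA fr]; split.
  move=> t; rewrite hA; split=> [[a [b [c ->]]] | [a [b [c ->]]]].
    exists (a * s - b * r), (- a * q + b * p), c.
    transitivity (lc x y z ((p * s - q * r) * a) ((p * s - q * r) * b) c).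
      by rewrite hd !mul1r.
    rewrite /lc; ring.
  exists (a * p + b * r), (a * q + b * s), c; rewrite /lc; ring.
move=> a b c e.
have e2 : lc x y z (a * p + b * r) (a * q + b * s) c = 0 by rewrite -e /lc; ring.
have [h1 h2 h3] := fr _ _ _ e2.
have ea : a = s * (a * p + b * r) - r * (a * q + b * s) by rewrite -[LHS]mulr1 -hd; ring.
have eb : b = - q * (a * p + b * r) + p * (a * q + b * s) by rewrite -[LHS]mulr1 -hd; ring.
by split=> //; [rewrite ea | rewrite eb]; rewrite h1 h2; ring.
Qed.

Lemma zb3_sw12 A x y z : zb3 A x y z -> zb3 A y x z.
Proof.
move=> [hA fr]; split.
  move=> t; rewrite hA; split=> [[a [b [c ->]]] | [a [b [c ->]]]];
   by exists b, a, c; rewrite /lc; ring.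
move=> a b c e; have [] := fr b a c; first by rewrite -e /lc; ring.
by move=> -> -> ->.
Qed.

Lemma zb3_sw23 A x y z : zb3 A x y z -> zb3 A x z y.
Proof.
move=> [hA fr]; split.
  move=> t; rewrite hA; split=> [[a [b [c ->]]] | [a [b [c ->]]]];
   by exists a, c, b; rewrite /lc; ring.
move=> a b c e; have [] := fr a c b; first by rewrite -e /lc; ring.
by move=> -> -> ->.
Qed.

Lemma zb3_eq A x y z x' y' z' : zb3 A x y z -> x = x' -> y = y' -> z = z' -> zb3 A x' y' z'.
Proof. by move=> h <- <- <-. Qed.

Lemma zb3_sh21 A x y z (m : int) : zb3 A x y z -> zb3 A x (y + m%:~R * x) z.
Proof.
move=> h; apply: (zb3_eq (zb3_E3 (p:=1) (q:=0) (r:=m) (s:=1) _ h)) => //; try ring.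
Qed.
Lemma zb3_sh31 A x y z (m : int) : zb3 A x y z -> zb3 A x y (z + m%:~R * x).
Proof. by move=> /zb3_sw23 /(zb3_sh21 m) /zb3_sw23. Qed.
Lemma zb3_sh32 A x y z (m : int) : zb3 A x y z -> zb3 A x y (z + m%:~R * y).
Proof. by move=> /zb3_sw12 /(zb3_sh31 m) /zb3_sw12. Qed.
Lemma intgE x : intg x <-> integralOver (intr : {rmorphism int -> R}) x.
Proof. by split=> [[p [mp rp]] | [p mp /rootP rp]]; exists p => //; apply/rootP. Qed.
Lemma intg_sub x y : intg x -> intg y -> intg (x - y).
Proof. by move=> /intgE hx /intgE hy; apply/intgE; apply: integral_sub. Qed.
Lemma intg_add x y : intg x -> intg y -> intg (x + y).
Proof. by move=> /intgE hx /intgE hy; apply/intgE; apply: integral_add. Qed.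
Lemma intg_mul x y : intg x -> intg y -> intg (x * y).
Proof. by move=> /intgE hx /intgE hy; apply/intgE; apply: integral_mul. Qed.
Lemma intg_int (z : int) : intg z%:~R.
Proof. apply/intgE; exact: (integral_id (intr : {rmorphism int -> R}) z). Qed.
End Gen.

Lemma sqf_cyclic (gT : finGroupType) (G : {group gT}) :
  abelian G -> (forall p, prime p -> ~~ (p * p %| #|G|)%N) -> cyclic G.
Proof.
move=> abG sqf; apply: nil_Zgroup_cyclic; last exact: abelian_nil.
apply/forall_inP=> V /SylowP[p pr_p sylV].
have sVG := pHall_sub sylV.
have pV := pHall_pgroup sylV.
apply: (dvdn_prime_cyclic pr_p).
have [k Vk] := p_natP pV.
have dV : (#|V| %| #|G|)%N by apply: cardSg.
move: dV; rewrite Vk; case: k Vk => [|[|k]] Vk dV; first by rewrite expn0 dvd1n.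
  by rewrite expn1.
exfalso; move/negP: (sqf p pr_p); apply; apply: dvdn_trans dV.
by rewrite !expnS mulnA dvdn_mulr.
Qed.

Definition phi3 (f : nat) (a b c : int) : 'rV['Z_f]_3 :=
  \row_(l < 3) (nth 0 [:: a; b; c] l)%:~R.

Lemma phi3D f a b c a' b' c' :
  phi3 f a b c + phi3 f a' b' c' = phi3 f (a + a') (b + b') (c + c').
Proof. by apply/rowP => l; rewrite !mxE; case: l => [[|[|[|//]]] ?] /=; rewrite intrD. Qed.

Lemma phi3M f a b c (n : nat) :
  phi3 f a b c *+ n = phi3 f (a * n%:Z) (b * n%:Z) (c * n%:Z).
Proof.
by apply/rowP => l; rewrite mulmxnE !mxE; case: l => [[|[|[|//]]] ?] /=;
  rewrite intrM mulrzr -pmulrn.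
Qed.

Lemma phi30 f : phi3 f 0 0 0 = 0.
Proof. by apply/rowP => l; rewrite !mxE; case: l => [[|[|[|//]]] ?]. Qed.

Lemma Zf0 (f : nat) (z : int) : (1 < f)%N -> (z%:~R : 'Z_f) = 0 <-> (f%:Z %| z)%Z.
Proof.
move=> hf; rewrite dvdzE /=.
have key : forall n : nat, (n%:R : 'Z_f) = 0 <-> (f %| n)%N.
  move=> n; rewrite /dvdn -(val_Zp_nat hf); split=> [-> // | /eqP h].
  by apply: val_inj.
case: z => n.
  by rewrite -pmulrn key.
rewrite NegzE mulrNz -pmulrn abszN /=; split.
  by move/eqP; rewrite oppr_eq0 => /eqP /key.
by move/key ->; rewrite oppr0.
Qed.

Lemma phi3_eq f a b c a' b' c' : (1 < f)%N ->
  phi3 f a b c = phi3 f a' b' c' <->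
  [/\ (f%:Z %| a - a')%Z, (f%:Z %| b - b')%Z & (f%:Z %| c - c')%Z].
Proof.
move=> hf; split.
  move=> e; split; apply/(Zf0 _ hf); rewrite intrB; apply/eqP; rewrite subr_eq0; apply/eqP.
  - by move/rowP/(_ (@Ordinal 3 0 isT)): e; rewrite !mxE.
  - by move/rowP/(_ (@Ordinal 3 1 isT)): e; rewrite !mxE.
  - by move/rowP/(_ (@Ordinal 3 2 isT)): e; rewrite !mxE.
case=> /(Zf0 _ hf) h1 /(Zf0 _ hf) h2 /(Zf0 _ hf) h3.
apply/rowP => l; rewrite !mxE; case: l => [[|[|[|//]]] ?] /=; apply/eqP; rewrite -subr_eq0 -intrB; apply/eqP => //.
Qed.

Lemma bez2 (u1 u2 : int) : exists g v1 v2 x1 x2 : int,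
  [/\ u1 = g * v1, u2 = g * v2 & x1 * v1 + x2 * v2 = 1].
Proof.
have [z|nz] := eqVneq (gcdz u1 u2) 0.
  move/eqP: z; rewrite gcdz_eq0 => /andP [/eqP -> /eqP ->].
  by exists 0, 1, 0, 1, 0; split; ring.
have [u [v huv]] := Bezoutz u1 u2.
have e1 := divzK (dvdz_gcdl u1 u2); have e2 := divzK (dvdz_gcdr u1 u2).
move: nz huv e1 e2; set g := gcdz u1 u2; set q1 := (u1 %/ g)%Z; set q2 := (u2 %/ g)%Z.
move=> nz huv e1 e2.
exists g, q1, q2, u, v.
split; [by rewrite mulrC e1 | by rewrite mulrC e2 |].
apply: (mulIf nz); rewrite /= mul1r -[RHS]huv -e1 -e2; ring.
Qed.

Section Mulco.
Variable R : comNzRingType.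
Lemma mulco (w t : R) e0 e1 e2 g0 g1 g2 n :
  w * w = lc 1 w t e0 e1 e2 -> t * t = lc 1 w t g0 g1 g2 -> w * t = n%:~R ->
  forall x0 x1 x2 y0 y1 y2,
  lc 1 w t x0 x1 x2 * lc 1 w t y0 y1 y2 =
  lc 1 w t (x0 * y0 + x1 * y1 * e0 + (x1 * y2 + x2 * y1) * n + x2 * y2 * g0)
           (x0 * y1 + x1 * y0 + x1 * y1 * e1 + x2 * y2 * g1)
           (x0 * y2 + x2 * y0 + x1 * y1 * e2 + x2 * y2 * g2).
Proof.
move=> hw ht hn x0 x1 x2 y0 y1 y2.
lazymatch goal with |- _ = ?RHS =>
  transitivity (RHS + (x1 * y1)%:~R * (w * w - lc 1 w t e0 e1 e2)
     + (x2 * y2)%:~R * (t * t - lc 1 w t g0 g1 g2)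
     + (x1 * y2 + x2 * y1)%:~R * (w * t - n%:~R)) end.
  by rewrite /lc; ring.
by rewrite hw ht hn !subrr !mulr0 !addr0.
Qed.
End Mulco.

Section Main.
Variable R : comNzRingType.
Hypothesis tf : forall (n : int) (x : R), n != 0 -> n%:~R * x = 0 -> x = 0.
Hypothesis ratint : forall (d m : int) (y : R), intg y -> d != 0 -> d%:~R * y = m%:~R -> (d %| m)%Z.
Hypothesis red : forall x : R, x * x = 0 -> x = 0.
Variable O : R -> Prop.
Hypothesis O1 : O 1.
Hypothesis OB : forall x y, O x -> O y -> O (x - y).
Hypothesis OM : forall x y, O x -> O y -> O (x * y).
Variables b1 b2 b3 : R.
Hypothesis Ob : zb3 O b1 b2 b3.
Hypothesis OOk : forall x, O x -> intg x.
Variable f : nat.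
Variable r : 'I_f -> R.
Hypothesis rint : forall i, intg (r i).
Hypothesis rcl : forall x, intg x -> exists! i, O (x - r i).
Hypothesis f_gt0 : (0 < f)%N.
Hypothesis sqf : forall p, prime p -> ~~ (p * p %| f)%N.

Local Notation fz := (f%:Z).
Local Notation fR := (f%:R : R).
Lemma fRE : fR = fz%:~R. Proof. by rewrite -pmulrn. Qed.
Lemma fz_neq0 : fz != 0. Proof. have := f_gt0; lia. Qed.

Lemma O0 : O 0. Proof. by rewrite -(subrr 1); apply: OB. Qed.
Lemma ON x : O x -> O (- x). Proof. by move=> h; rewrite -sub0r; apply: OB => //; apply: O0. Qed.
Lemma OD x y : O x -> O y -> O (x + y).
Proof. by move=> hx hy; rewrite -[y]opprK; apply: OB => //; apply: ON. Qed.
Lemma Oeq x y : O x -> x = y -> O y. Proof. by move=> h <-. Qed.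
Lemma OZ (z : int) x : O x -> O (z%:~R * x).
Proof.
move=> /(proj1 Ob) [a [b [c ->]]]; apply/(proj1 Ob).
by exists (z * a), (z * b), (z * c); rewrite /lc; ring.
Qed.
Lemma Oint (z : int) : O z%:~R.
Proof. by rewrite -[z%:~R]mulr1; apply: OZ. Qed.
Lemma Osum (F : 'I_f -> R) : (forall i, O (F i)) -> O (\sum_i F i).
Proof. by move=> h; apply: (big_ind O O0 OD) => i _; apply: h. Qed.

Lemma intg0 : intg (0 : R). Proof. exact: (intg_int _ 0). Qed.
Lemma intgZ (z : int) (x : R) : intg x -> intg (z%:~R * x).
Proof. by move=> h; apply: intg_mul => //; apply: intg_int. Qed.

Lemma class_uniq i j : O (r i - r j) -> i = j.
Proof.
move=> h; have [k [_ u]] := rcl (rint i).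
have e1 : k = i by apply: u; rewrite subrr; exact: O0.
by rewrite -e1; apply: u.
Qed.

Lemma fOk x : intg x -> O (fR * x).
Proof.
move=> hx.
have /fin_all_exists [s hs] : forall i, exists j, O (r i + x - r j).
  by move=> i; have [j [hj _]] := rcl (intg_add (rint i) hx); exists j.
have sinj : injective s.
  move=> i i' e; apply: class_uniq.
  by apply: (Oeq (OB (hs i) (hs i'))); rewrite e; ring.
have := Osum hs; rewrite sumrB big_split /=.
have -> : \sum_i r (s i) = \sum_i r i by symmetry; apply: reindex_inj.
rewrite sumr_const card_ord => h; apply: (Oeq h); rewrite -mulr_natl; ring.
Qed.

Lemma modk (hf : (1 < f)%N) x y a b c a' b' c' :
  fR * x = lc b1 b2 b3 a b c -> fR * y = lc b1 b2 b3 a' b' c' ->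
  O (x - y) <-> phi3 f a b c = phi3 f a' b' c'.
Proof.
move=> hx hy; rewrite phi3_eq //; split.
  move=> /(proj1 Ob) [e1 [e2 [e3 he]]].
  have : lc b1 b2 b3 a b c = lc b1 b2 b3 (fz * e1 + a') (fz * e2 + b') (fz * e3 + c').
    by rewrite -hx; transitivity (fR * (x - y) + fR * y); [ring | rewrite he hy fRE /lc; ring].
  case/(lc_uniq (proj2 Ob)) => -> -> ->.
  by split; rewrite addrK dvdz_mulr.
case=> /dvdzP [e1 h1] /dvdzP [e2 h2] /dvdzP [e3 h3].
apply/(proj1 Ob); exists e1, e2, e3.
apply/eqP; rewrite -subr_eq0; apply/eqP; apply: (tf fz_neq0).
rewrite -fRE mulrBr mulrBr hx hy.
have -> : a = a' + e1 * fz by rewrite -h1; ring.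
have -> : b = b' + e2 * fz by rewrite -h2; ring.
have -> : c = c' + e3 * fz by rewrite -h3; ring.
rewrite fRE /lc; ring.
Qed.

Lemma w0_ex : exists w0, [/\ intg w0,
   (forall x, intg x -> exists j : int, O (x - j%:~R * w0)) &
   (forall j : int, O (j%:~R * w0) -> (fz %| j)%Z)].
Proof.
have [f1|f_gt1] := leqP f 1.
  have ef : f = 1%N by apply/eqP; rewrite eqn_leq f1 f_gt0.
  exists 0; split; first exact: intg0.
    move=> x hx; exists 0; rewrite mulr0 subr0.
    have [i [hi _]] := rcl hx; have [i0 [h0 _]] := rcl intg0.
    have ei : i = i0.
      apply: ord_inj; have h1 := ltn_ord i; have h2 := ltn_ord i0.
      move: (nat_of_ord i) (nat_of_ord i0) h1 h2 => a b; rewrite ef; lia.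
    rewrite ei in hi.
    by apply: (Oeq (OB hi h0)); ring.
  by move=> j _; rewrite ef dvd1z.
have /fin_all_exists [c hc] : forall i : 'I_f, exists c : int * int * int,
    fR * r i = lc b1 b2 b3 c.1.1 c.1.2 c.2.
  move=> i; have /(proj1 Ob) [a [b [d e]]] := fOk (rint i).
  by exists (a, b, d).
pose ph i := phi3 f (c i).1.1 (c i).1.2 (c i).2.
pose H := [set ph i | i : 'I_f].
have gH : group_set H.
  apply/group_setP; split.
    have [i0 [h0 _]] := rcl intg0.
    apply/imsetP; exists i0 => //; rewrite zmod1gE -(phi30 f).
    have hx0 : fR * 0 = lc b1 b2 b3 0 0 0 by rewrite mulr0 /lc; ring.
    exact: (modk f_gt1 hx0 (hc i0)).1 h0.
  move=> _ _ /imsetP [i _ ->] /imsetP [j _ ->].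
  rewrite zmodMgE /ph phi3D.
  have [l [hl _]] := rcl (intg_add (rint i) (rint j)).
  apply/imsetP; exists l => //.
  have hs : fR * (r i + r j) = lc b1 b2 b3 ((c i).1.1 + (c j).1.1) ((c i).1.2 + (c j).1.2) ((c i).2 + (c j).2).
    by rewrite mulrDr hc hc /lc; ring.
  exact: (modk f_gt1 hs (hc l)).1 hl.
have cardH : #|H| = f.
  rewrite card_imset ?card_ord // => i j /(modk f_gt1 (hc i) (hc j)).
  exact: class_uniq.
have cyc : cyclic (group gH).
  apply: sqf_cyclic; first exact: zmod_abelian.
  by move=> p pp; rewrite /= cardH; apply: sqf.
case/cyclicP: cyc => h /= defH.
have : h \in H by rewrite defH cycle_id.
case/imsetP => l _ eh.
have ordh : #[h]%g = f by rewrite orderE -defH cardH.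
have key : forall n : nat, fR * ((n%:Z)%:~R * r l) =
    lc b1 b2 b3 ((c l).1.1 * n%:Z) ((c l).1.2 * n%:Z) ((c l).2 * n%:Z).
  by move=> n; rewrite mulrCA hc /lc; ring.
exists (r l); split; first exact: rint.
  move=> x hx; have [i [hi _]] := rcl hx.
  have : ph i \in <[h]>%g by rewrite -defH; apply/imsetP; exists i.
  case/cycleP => n; rewrite zmodXgE eh /ph phi3M => e.
  exists n%:Z; have := (modk f_gt1 (hc i) (key n)).2 e.
  by move=> h2; apply: (Oeq (OD hi h2)); ring.
move=> j hj.
have hn : O ((`|j|%N%:Z)%:~R * r l).
  case: j hj => n hj; first by [].
  by rewrite NegzE mulrNz -mulrzl in hj; apply: (Oeq (ON hj)); rewrite -mulrzl; ring.
have : phi3 f ((c l).1.1 * `|j|%N%:Z) ((c l).1.2 * `|j|%N%:Z) ((c l).2 * `|j|%N%:Z) = phi3 f 0 0 0.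
  have hx0 : fR * 0 = lc b1 b2 b3 0 0 0 by rewrite mulr0 /lc; ring.
  by apply: (modk f_gt1 (key _) hx0).1; rewrite subr0.
rewrite -phi3M phi30 -/(ph l) -eh -zmodXgE => /eqP.
by rewrite -order_dvdn ordh dvdzE.
Qed.


Lemma intg_lc (u v w : R) a b c : intg u -> intg v -> intg w -> intg (lc u v w a b c).
Proof.
by move=> hu hv hw; rewrite /lc; apply: intg_add; [apply: intg_add|]; apply: intgZ.
Qed.

Lemma L6 : exists be ga, zb3 O 1 be ga.
Proof.
have /(proj1 Ob) [u1 [u2 [u3 e1]]] := O1.
have [g [v1 [v2 [x1 [x2 [h1 h2 h3]]]]]] := bez2 u1 u2.
have B1 := zb3_E3 (p:=v1) (q:=v2) (r:=-x2) (s:=x1) (ltac:(rewrite -h3; ring)) Ob.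
have B2 := zb3_sw23 B1.
have [d [w1 [w2 [z1 [z2 [k1 k2 k3]]]]]] := bez2 g u3.
have B3 := zb3_E3 (p:=w1) (q:=w2) (r:=-z2) (s:=z1) (ltac:(rewrite -k3; ring)) B2.
set y := w1%:~R * _ + _ in B3.
have Oy : O y.
  by apply/(proj1 B3); exists 1, 0, 0; rewrite /lc; ring.
have dy : d%:~R * y = 1.
  rewrite [RHS]e1 /y /lc h1 h2 k1 k2; ring.
have dn0 : d != 0.
  by apply/eqP => d0; move: dy; rewrite d0 mul0r => /eqP; rewrite eq_sym oner_eq0.
have /ratint : d%:~R * y = 1%:~R by rewrite dy.
move=> /(_ (OOk Oy) dn0); rewrite dvdz1 => /eqP ad.
have dd : d * d = 1 by move: ad; case: d {dn0 dy k1 k2 B3 y Oy} => n; rewrite ?NegzE /= => ->.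
have yd : y = d%:~R.
  have : (d * d)%:~R * y = d%:~R :> R by rewrite intrM -mulrA dy mulr1.
  by rewrite dd rmorph1 mul1r.
have B4 := zb3_E3 (p:=d) (q:=0) (r:=0) (s:=d) (ltac:(rewrite dd; ring)) B3.
eexists; eexists; apply: (zb3_eq B4); last reflexivity.
  by rewrite yd -intrM dd mul0r addr0.
reflexivity.
Qed.

Lemma intg1 : intg (1 : R).
Proof. by have := intg_int R 1; rewrite rmorph1. Qed.

Lemma L7 : exists a ga, zb3 (@intg R) 1 a ga /\ zb3 O 1 (fR * a) ga.
Proof.
have [be [ga B]] := L6.
have [w0 [iw0 cw0 dw0]] := w0_ex.
have /(proj1 B) [c0 [c2 [c3 hc]]] := fOk iw0.
have [g [v2 [v3 [x2 [x3 [h1 h2 h3]]]]]] := bez2 c2 c3.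
have B1 := zb3_sw12 (zb3_sw23 (zb3_E3 (p:=v2) (q:=v3) (r:=-x3) (s:=x2)
      (ltac:(rewrite -h3; ring)) (zb3_sw23 (zb3_sw12 B)))).
set be' := v2%:~R * be + v3%:~R * ga in B1.
set ga' := (-x3)%:~R * be + x2%:~R * ga in B1.
have hw : fR * w0 = c0%:~R + g%:~R * be' by rewrite hc /lc /be' h1 h2; ring.
have Obe : O be' by apply/(proj1 B1); exists 0, 1, 0; rewrite /lc; ring.
have Oga : O ga' by apply/(proj1 B1); exists 0, 0, 1; rewrite /lc; ring.
have [e [g1 [f1 [al [bb [k1 k2 k3]]]]]] := bez2 g fz.
have en0 : e != 0 by apply: contraNneq fz_neq0 => e0; rewrite k2 e0 mul0r.
set y := f1%:~R * w0 - g1%:~R * be'.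
have iy : intg y by apply: intg_sub; apply: intgZ => //; exact: OOk.
have ey : e%:~R * y = c0%:~R.
  transitivity (fR * w0 - g%:~R * be'); last by rewrite hw; ring.
  by rewrite /y fRE k1 k2; ring.
have /dvdzP [c0' hc0] := ratint iy en0 ey.
have yc : y = c0'%:~R.
  apply/eqP; rewrite -subr_eq0; apply/eqP; apply: (tf en0).
  by rewrite mulrBr ey hc0 intrM; ring.
have Of1 : O (f1%:~R * w0).
  have -> : f1%:~R * w0 = y + g1%:~R * be' by rewrite /y; ring.
  by rewrite yc; apply: OD; [apply: Oint | apply: OZ].
have /dvdzP [t ht] := dw0 _ Of1.
have et : e * t = 1.
  apply: (mulIf fz_neq0); rewrite /= mul1r.
  by rewrite [in RHS]k2 ht; ring.
have ee : e * e = 1.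
  have : (e %| 1)%Z by apply/dvdzP; exists t; rewrite mulrC et.
  rewrite dvdz1 => /eqP ad.
  by move: ad; case: (e) => n; rewrite ?NegzE /= => ->.
set j := al * e.
set q := - bb * e.
have jg : j * g = 1 + fz * q.
  apply/eqP; rewrite -subr_eq0; apply/eqP.
  transitivity ((al * g1 + bb * f1 - 1) * (e * e) + (e * e - 1)).
    by rewrite /j /q k1 k2; ring.
  by rewrite k3 ee; ring.
set m := ((j * c0) %/ fz)%Z.
set rr := ((j * c0) %% fz)%Z.
have hjc : j * c0 = m * fz + rr by exact: divz_eq.
set a := j%:~R * w0 - q%:~R * be' - m%:~R.
have fa : fR * a = rr%:~R + be'.
  transitivity (j%:~R * (fR * w0) - (fz * q)%:~R * be' - (m * fz)%:~R).
    by rewrite /a fRE; ring.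
  rewrite hw.
  transitivity ((j * c0)%:~R + (j * g)%:~R * be' - (fz * q)%:~R * be' - (m * fz)%:~R).
    by ring.
  by rewrite jg hjc; ring.
have BO : zb3 O 1 (fR * a) ga'.
  apply: (zb3_eq (zb3_sh21 rr B1)) => //.
  by rewrite fa; ring.
have ia : intg a.
  apply: intg_sub; first apply: intg_sub.
  - by apply: intgZ.
  - by apply: intgZ; apply: OOk.
  by apply: intg_int.
have Ow : O (w0 - g%:~R * a).
  have -> : w0 - g%:~R * a = - q%:~R * (fR * w0) + (g * q)%:~R * be' + (g * m)%:~R.
    transitivity ((1 - j * g)%:~R * w0 + (g * q)%:~R * be' + (g * m)%:~R).
      by rewrite /a; ring.
    by rewrite jg fRE; ring.
  apply: OD; [apply: OD|].
  - by rewrite mulNr; apply: ON; apply: OZ; apply: fOk.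
  - by apply: OZ.
  by apply: Oint.
exists a, ga'; split; last exact: BO.
split.
  move=> x; split.
    move=> ix; have [J hJ] := cw0 x ix.
    have : O (x - (J * g)%:~R * a).
      by apply: (Oeq (OD hJ (OZ J Ow))); rewrite intrM; ring.
    case/(proj1 BO) => [al' [be'' [ga'' he]]].
    exists al', (be'' * fz + J * g), ga''.
    by rewrite -[x](subrK ((J * g)%:~R * a)) he /lc fRE; ring.
  case=> [al' [be'' [ga'' ->]]]; apply: intg_lc => //; first exact: intg1.
  exact: OOk.
move=> al' be'' ga'' e0.
have : lc 1 (fR * a) ga' (fz * al') be'' (fz * ga'') = fz%:~R * lc 1 a ga' al' be'' ga''.
  by rewrite /lc fRE; ring.
rewrite e0 mulr0 => /(proj2 BO) [h1' h2' h3'].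
move/eqP: h1'; rewrite mulf_eq0 (negPf fz_neq0) /= => /eqP h1'.
move/eqP: h3'; rewrite mulf_eq0 (negPf fz_neq0) /= => /eqP h3'.
by [].
Qed.

Lemma L8 : exists w t (n : int),
  [/\ zb3 (@intg R) 1 w t, zb3 O 1 (fR * w) t & w * t = n%:~R].
Proof.
have [a [ga [Bk BO]]] := L7.
have /(proj1 Bk) [n0 [n1 [n2 hag]]] : intg (a * ga).
  apply: intg_mul; first by apply/(proj1 Bk); exists 0, 1, 0; rewrite /lc; ring.
  by apply/(proj1 Bk); exists 0, 0, 1; rewrite /lc; ring.
exists (a - n2%:~R), (ga - n1%:~R), (n0 + n1 * n2); split.
- by apply: (zb3_eq (zb3_sh31 (- n1) (zb3_sh21 (- n2) Bk))) => //; ring.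
- apply: (zb3_eq (zb3_sh31 (- n1) (zb3_sh21 (- (fz * n2)) BO))) => //; last by ring.
  by rewrite fRE; ring.
transitivity (a * ga - n1%:~R * a - n2%:~R * ga + (n1 * n2)%:~R); first by ring.
by rewrite hag /lc; ring.
Qed.

Lemma coordk (w t x : R) : zb3 (@intg R) 1 w t -> intg x ->
  exists a b c, x = lc 1 w t a b c.
Proof. by move=> Bk /(proj1 Bk). Qed.

Lemma intg_w (w t : R) : zb3 (@intg R) 1 w t -> intg w /\ intg t.
Proof.
move=> Bk; split; apply/(proj1 Bk); [exists 0, 1, 0 | exists 0, 0, 1]; rewrite /lc; ring.
Qed.

Lemma rels (w t : R) n e0 e1 e2 g0 g1 g2 : zf3 1 w t ->
  w * w = lc 1 w t e0 e1 e2 -> t * t = lc 1 w t g0 g1 g2 -> w * t = n%:~R ->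
  [/\ n = e2 * g1, e0 = - (e2 * g2) & g0 = - (g1 * e1)].
Proof.
move=> fr hw ht hn; have m := mulco hw ht hn.
have A1 : lc 1 w t 0 n 0 = lc 1 w t (e1 * n + e2 * g0) (e2 * g1) (e0 + e2 * g2).
  transitivity (w * (w * t)); first by rewrite hn /lc; ring.
  transitivity (lc 1 w t e0 e1 e2 * lc 1 w t 0 0 1); first by rewrite mulrA hw /lc; ring.
  by rewrite m; congr lc; ring.
have A2 : lc 1 w t 0 0 n = lc 1 w t (g1 * e0 + g2 * n) (g0 + g1 * e1) (g1 * e2).
  transitivity (t * (w * t)); first by rewrite hn /lc; ring.
  transitivity (lc 1 w t g0 g1 g2 * lc 1 w t 0 1 0); first by rewrite mulrC -mulrA ht /lc; ring.
  by rewrite m; congr lc; ring.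
have [a1 a2 a3] := lc_uniq fr A1.
have [c1 c2 c3] := lc_uniq fr A2.
split.
- by rewrite a2.
- by move: a3; lia.
- by move: c2; lia.
Qed.

Lemma unit1 (w t : R) n g0 g1 g2 : zb3 (@intg R) 1 w t -> zb3 O 1 (fR * w) t ->
  w * t = n%:~R -> t * t = lc 1 w t g0 g1 g2 -> g1 != 0 ->
  exists w' t' (n' : int),
  [/\ zb3 (@intg R) 1 w' t', zb3 O 1 (fR * w') t', w' * t' = n'%:~R & n' != 0].
Proof.
move=> Bk BO hn ht g1n0.
have [iw it] := intg_w Bk.
have [e0 [e1 [e2 hw]]] := coordk Bk (intg_mul iw iw).
have [rn re0 rg0] := rels (proj2 Bk) hw ht hn.
have [s hs] : exists s : int, e2 - s * e1 + s * s * g2 - s * s * s * g1 != 0.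
  case E0 : (e2 - 0 * e1 + 0 * 0 * g2 - 0 * 0 * 0 * g1 == 0); last by exists 0; rewrite E0.
  case E1 : (e2 - 1 * e1 + 1 * 1 * g2 - 1 * 1 * 1 * g1 == 0); last by exists 1; rewrite E1.
  case E2 : (e2 - 2 * e1 + 2 * 2 * g2 - 2 * 2 * 2 * g1 == 0); last by exists 2; rewrite E2.
  case E3 : (e2 - 3 * e1 + 3 * 3 * g2 - 3 * 3 * 3 * g1 == 0); last by exists 3; rewrite E3.
  exfalso; move/eqP: E0; move/eqP: E1; move/eqP: E2; move/eqP: E3.
  by move: g1n0; lia.
exists (lc 1 w t (s * s * g1 - s * g2) 1 s), (lc 1 w t (- (s * g1)) 0 1),
  ((s * s * g1 - s * g2) * (- (s * g1)) + n + s * g0); split.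
- apply: (zb3_eq (zb3_sh31 (- (s * g1)) (zb3_sh21 (s * s * g1 - s * g2)
     (zb3_sw23 (zb3_sh32 s (zb3_sw23 Bk)))))) => //; rewrite /lc; ring.
- apply: (zb3_eq (zb3_sh31 (- (s * g1)) (zb3_sh21 (fz * (s * s * g1 - s * g2))
     (zb3_sw23 (zb3_sh32 (fz * s) (zb3_sw23 BO)))))) => //; rewrite /lc ?fRE; ring.
- rewrite (mulco hw ht hn).
  transitivity (lc 1 w t ((s * s * g1 - s * g2) * (- (s * g1)) + n + s * g0) 0 0);
    last by rewrite /lc; ring.
  by congr lc; ring.
have -> : (s * s * g1 - s * g2) * - (s * g1) + n + s * g0 =
    g1 * (e2 - s * e1 + s * s * g2 - s * s * s * g1) by rewrite rn rg0; ring.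
by rewrite mulf_neq0.
Qed.

Lemma fam2 (w t : R) n g0 g2 : zb3 (@intg R) 1 w t -> zb3 O 1 (fR * w) t ->
  w * t = n%:~R -> t * t = lc 1 w t g0 0 g2 ->
  exists w' t' (n' c0 c1 c2 : int),
  [/\ zb3 (@intg R) 1 w' t', zb3 O 1 (fR * w') t', w' * t' = n'%:~R,
      t' * t' = lc 1 w' t' c0 c1 c2 & c1 != 0].
Proof.
move=> Bk BO hn ht.
have [iw it] := intg_w Bk.
have [e0 [e1 [e2 hw]]] := coordk Bk (intg_mul iw iw).
have [rn re0 rg0] := rels (proj2 Bk) hw ht hn.
have nz : ~ [/\ e1 = 0, e2 = 0 & g2 = 0].
  case=> z1 z2 z3.
  have w0 : w = 0.
    apply: red; rewrite hw re0 z1 z2 z3 /lc; ring.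
  have [_ h _] := proj2 Bk 0 1 0 (ltac:(rewrite /lc w0; ring)).
  by move: h; lia.
have [s [hs0 hs]] : exists s : int, s != 0 /\ - g2 + s * (fz * e1) - s * s * (fz * fz * e2) != 0.
  case E1 : (- g2 + 1 * (fz * e1) - 1 * 1 * (fz * fz * e2) == 0); last by exists 1; rewrite E1.
  case E2 : (- g2 + 2 * (fz * e1) - 2 * 2 * (fz * fz * e2) == 0); last by exists 2; rewrite E2.
  case E3 : (- g2 + 3 * (fz * e1) - 3 * 3 * (fz * fz * e2) == 0); last by exists 3; rewrite E3.
  exfalso; apply: nz.
  move/eqP: E1; move/eqP: E2; move/eqP: E3.
  have [B hB] : exists B, fz * e1 = B by eexists.
  have [C hC] : exists C, fz * fz * e2 = C by eexists.
  rewrite hB hC => E3 E2 E1.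
  have g20 : g2 = 0 by lia.
  have B0 : B = 0 by lia.
  have C0 : C = 0 by lia.
  have fn := fz_neq0.
  split => //.
  - by move/eqP: hB; rewrite B0 mulf_eq0 (negPf fn) => /eqP.
  - by move/eqP: hC; rewrite C0 !mulf_eq0 (negPf fn) => /eqP.
pose v := - (fz * s * e2).
pose u := fz * fz * s * s * e2 - fz * s * e1.
exists (lc 1 w t v 1 0), (lc 1 w t u (fz * s) 1), (v * u + fz * s * e0 + n).
pose Z0 := u * u + fz * s * (fz * s) * e0 + (fz * s * 1 + 1 * (fz * s)) * n + 1 * 1 * g0.
pose Z1 := u * (fz * s) + fz * s * u + fz * s * (fz * s) * e1 + 1 * 1 * 0.
pose Z2 := u * 1 + 1 * u + fz * s * (fz * s) * e2 + 1 * 1 * g2.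
exists (Z0 - Z1 * v + Z2 * (fz * s * v - u)), (Z1 - fz * s * Z2), Z2; split.
- apply: (zb3_eq (zb3_sh31 (u - fz * s * v) (zb3_sh32 (fz * s) (zb3_sh21 v Bk)))) => //;
    rewrite /lc; ring.
- apply: (zb3_eq (zb3_sh31 (u - fz * s * v) (zb3_sh32 s (zb3_sh21 (fz * v) BO)))) => //;
    rewrite /lc ?fRE; ring.
- rewrite (mulco hw ht hn).
  transitivity (lc 1 w t (v * u + fz * s * e0 + n) 0 0); last by rewrite /lc; ring.
  by congr lc; rewrite /u /v; ring.
- rewrite (mulco hw ht hn) -/Z0 -/Z1 -/Z2.
  rewrite /lc; ring.
have -> : Z1 - fz * s * Z2 = fz * s * (- g2 + s * (fz * e1) - s * s * (fz * fz * e2)).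
  by rewrite /Z1 /Z2 /u; ring.
by rewrite !mulf_neq0 // fz_neq0.
Qed.

Definition idealR (I : R -> Prop) :=
  [/\ (forall x, I x -> intg x), I 0, (forall x y, I x -> I y -> I (x - y))
    & (forall r x, intg r -> I x -> I (r * x))].

Lemma cond (w t : R) n : zb3 (@intg R) 1 w t -> zb3 O 1 (fR * w) t ->
  w * t = n%:~R ->
  [/\ idealR (zs3 fR (fR * w) t), (forall x, zs3 fR (fR * w) t x -> O x)
    & forall I, idealR I -> (forall x, I x -> O x) -> forall x, I x -> zs3 fR (fR * w) t x].
Proof.
move=> Bk BO hn.
have [iw it] := intg_w Bk.
have [e0 [e1 [e2 hw]]] := coordk Bk (intg_mul iw iw).
have [g0 [g1 [g2 ht]]] := coordk Bk (intg_mul it it).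
have [rn re0 rg0] := rels (proj2 Bk) hw ht hn.
have [q hq] : exists q, g1 = q * fz.
  have /(proj1 BO) [p1 [q [p3 h]]] : O (t * t).
    by apply: OM; apply/(proj1 BO); exists 0, 0, 1; rewrite /lc; ring.
  have : lc 1 w t g0 g1 g2 = lc 1 w t p1 (q * fz) p3 by rewrite -ht h /lc fRE; ring.
  by case/(lc_uniq (proj2 Bk)) => _ -> _; exists q.
have CE : forall x, zs3 fR (fR * w) t x <-> exists a b c, x = lc 1 w t (a * fz) (b * fz) c.
  move=> x; split; case=> a [b [c ->]]; exists a, b, c; rewrite /lc fRE; ring.
have m := mulco hw ht hn.
split.
- split.
  + move=> x /CE [a [b [c ->]]]; apply: intg_lc => //; exact: intg1.
  + by apply/CE; exists 0, 0, 0; rewrite /lc; ring.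
  + move=> x y /CE [a [b [c ->]]] /CE [a' [b' [c' ->]]]; apply/CE.
    by exists (a - a'), (b - b'), (c - c'); rewrite lcB; congr lc; ring.
  + move=> y x iy /CE [a' [b' [c' ->]]]; apply/CE.
    have [a [b [c ->]]] := coordk Bk iy.
    rewrite m.
    exists (a * a' + b * b' * e0 + b * c' * e2 * q + c * b' * e2 * q * fz - c * c' * q * e1),
      (a * b' + b * a' + b * b' * e1 + c * c' * q), (a * c' + c * (a' * fz) + b * (b' * fz) * e2 + c * c' * g2).
    by congr lc; rewrite ?rn ?rg0 ?hq; ring.
- move=> x /CE [a [b [c ->]]]; apply/(proj1 BO).
  by exists (a * fz), b, c; rewrite /lc fRE; ring.
move=> I [I1 I2 I3 I4] IO x Ix.
have /(proj1 BO) [a [b [c ex]]] := IO x Ix.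
have /(proj1 BO) [a' [b' [c' ewx]]] := IO _ (I4 _ _ iw Ix).
have : lc 1 w t a' (b' * fz) c' = lc 1 w t (b * fz * e0 + c * n) (a + b * fz * e1) (b * fz * e2).
  transitivity (w * x); first by rewrite ewx /lc fRE; ring.
  transitivity (lc 1 w t 0 1 0 * lc 1 w t a (b * fz) c); first by rewrite ex /lc fRE; ring.
  by rewrite m; congr lc; ring.
case/(lc_uniq (proj2 Bk)) => _ hb _.
have ha : a = (b' - b * e1) * fz by rewrite mulrBl hb; ring.
by apply/CE; exists (b' - b * e1), b, c; rewrite ex ha /lc fRE; ring.
Qed.

Theorem mainR : exists (w t : R) (n : int),
  [/\ zb3 (@intg R) 1 w t, w * t = n%:~R, n != 0,
      (forall x, O x <-> zs3 1 (fR * w) t x) &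
      [/\ idealR (zs3 fR (fR * w) t), (forall x, zs3 fR (fR * w) t x -> O x)
        & forall I, idealR I -> (forall x, I x -> O x) -> forall x, I x -> zs3 fR (fR * w) t x]].
Proof.
have [w [t [n [Bk BO hn]]]] := L8.
have fin : forall w t n g0 g1 g2, zb3 (@intg R) 1 w t -> zb3 O 1 (fR * w) t ->
    w * t = n%:~R -> t * t = lc 1 w t g0 g1 g2 -> g1 != 0 ->
    exists (w t : R) (n : int),
  [/\ zb3 (@intg R) 1 w t, w * t = n%:~R, n != 0,
      (forall x, O x <-> zs3 1 (fR * w) t x) &
      [/\ idealR (zs3 fR (fR * w) t), (forall x, zs3 fR (fR * w) t x -> O x)
        & forall I, idealR I -> (forall x, I x -> O x) -> forall x, I x -> zs3 fR (fR * w) t x]].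
  move=> w1 t1 n1 g0 g1 g2 Bk1 BO1 hn1 ht1 g1n0.
  have [w2 [t2 [n2 [Bk2 BO2 hn2 n2n0]]]] := unit1 Bk1 BO1 hn1 ht1 g1n0.
  exists w2, t2, n2; split => //; first exact: (proj1 BO2).
  exact: cond Bk2 BO2 hn2.
have [iw it] := intg_w Bk.
have [g0 [g1 [g2 ht]]] := coordk Bk (intg_mul it it).
have [g1z|g1n0] := eqVneq g1 0; last exact: fin Bk BO hn ht g1n0.
rewrite g1z in ht.
have [w' [t' [n' [c0 [c1 [c2 [Bk' BO' hn' ht' c1n0]]]]]]] := fam2 Bk BO hn ht.
exact: fin Bk' BO' hn' ht' c1n0.
Qed.

End Main.

Lemma rat_root_int (p : {poly int}) (q : rat) : p \is monic ->
  (map_poly (fun z : int => z%:~R : rat) p).[q] = 0 -> exists z : int, q = z%:~R.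
Proof.
move=> mp rq.
have : ('X - q%:P) %| map_poly (fun z : int => z%:~R : rat) p by rewrite dvdp_XsubCl; apply/rootP.
case/dvdpP_rat_int => p1 [a an0 ea] [r0 epr].
have l1 : lead_coef p1 * lead_coef r0 = 1.
  by rewrite -lead_coefM -epr; apply/monicP.
have lu : (lead_coef p1 = 1) \/ (lead_coef p1 = -1).
  have : (lead_coef p1 %| 1)%Z by apply/dvdzP; exists (lead_coef r0); rewrite mulrC l1.
  rewrite dvdz1; case: (lead_coef p1) => n /=.
    by move=> /eqP ->; left.
  by move=> /eqP [->]; right.
have la : a * (lead_coef p1)%:~R = 1.
  have := congr1 lead_coef ea; rewrite lead_coefXsubC lead_coefZ.
  by rewrite lead_coef_map_inj //; last exact: intr_inj.
have c0 := congr1 (fun P : {poly rat} => P`_0) ea.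
rewrite /= coefZ coef_map /= coefB coefX coefC /= sub0r in c0.
case: lu => hl; rewrite hl in la.
  exists (- p1`_0); rewrite rmorph1 mulr1 in la.
  by rewrite -[q]opprK c0 la mul1r rmorphN.
exists (p1`_0); rewrite rmorphN rmorph1 mulrN1 in la.
by rewrite -[q]opprK c0 -[a]opprK la mulN1r opprK.
Qed.

Section KLemmas.
Variable k : falgType rat.

Lemma k_int (n : int) : (n%:~R : k) = (n%:~R : rat)%:A.
Proof. by rewrite scaler_int. Qed.

Lemma k_tf (n : int) (x : k) : n != 0 -> n%:~R * x = 0 -> x = 0.
Proof.
move=> nn0 h.
have nq : (n%:~R : rat) != 0 by rewrite intr_eq0.
rewrite -[x]scale1r -(mulVf nq) -scalerA -[(n%:~R : rat) *: x]mulr_algl -k_int h scaler0.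
by [].
Qed.

Lemma k_inv (n : int) : n != 0 -> (n%:~R : k) * ((n%:~R : rat)^-1)%:A = 1.
Proof.
move=> nn0; have nq : (n%:~R : rat) != 0 by rewrite intr_eq0.
by rewrite k_int mulr_algl scalerA divff // scale1r.
Qed.

Lemma k_ratint (d m : int) (y : k) : maximal_order y -> d != 0 -> d%:~R * y = m%:~R -> (d %| m)%Z.
Proof.
move=> [p [mp rp]] dn0 e.
have dq : (d%:~R : rat) != 0 by rewrite intr_eq0.
set q : rat := m%:~R / d%:~R.
have yq : y = q%:A.
  apply/eqP; rewrite -subr_eq0; apply/eqP; apply: (k_tf dn0).
  by rewrite mulrBr e (k_int d) mulr_algl scalerA /q mulrC divfK // -k_int subrr.
have ep : map_poly (fun z : int => z%:~R : k) p =
    map_poly (in_alg k) (map_poly (fun z : int => z%:~R : rat) p).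
  rewrite -map_poly_comp; apply: eq_map_poly => z /=.
  by rewrite k_int.
rewrite ep yq -in_algE horner_map /= in rp.
have rq : (map_poly (fun z : int => z%:~R : rat) p).[q] = 0.
  by move/eqP: rp; rewrite scaler_eq0 oner_eq0 orbF => /eqP.
have [z hz] := rat_root_int mp rq.
apply/dvdzP; exists z; apply: (intr_inj (R := rat)).
by rewrite intrM -hz /q divfK.
Qed.

End KLemmas.

Section Transfer.
Variable k : falgType rat.
Hypothesis kC : commutative (@GRing.mul k).
Definition kc : Type := k.
HB.instance Definition _ := GRing.NzRing.on kc.
HB.instance Definition _ := GRing.PzSemiRing_hasCommutativeMul.Build kc kC.

Lemma k_unit (w t : k) (n : int) : w * t = n%:~R -> n != 0 -> w \is a GRing.unit.
Proof.
move=> hn nn0; apply/unitrP; exists (t * ((n%:~R : rat)^-1)%:A).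
have h : w * (t * ((n%:~R : rat)^-1)%:A) = 1 by rewrite mulrA hn k_inv.
by split; [rewrite [_ * w]kC | ].
Qed.

Lemma prop_sec (O : k -> Prop) (f : nat) :
  (forall (x : k) (n : nat), x ^+ n = 0 -> x = 0) ->
  cubic_ring O -> subset_k O (@maximal_order k) ->
  index_is (@maximal_order k) O f -> squarefree f ->
  exists w t : k,
    [/\ normalized_basis (@maximal_order k) w t,
        w \is a GRing.unit, t \is a GRing.unit,
        eq_kset O (zspan3 1 (f%:R * w) t)
      & is_conductor (@maximal_order k) O (zspan3 f%:R (f%:R * w) t)].
Proof.
move=> hred [O1 OB OM [b1 [b2 [b3 Ob]]]] OOk [r [rint rcl]] [f0 sqf].
have red : forall x : kc, x * x = 0 -> x = 0.
  by move=> x hx; apply: (hred x 2); rewrite expr2.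
have := @mainR kc (@k_tf k) (@k_ratint k) red O O1 OB OM b1 b2 b3 Ob OOk f r rint rcl f0 sqf.
case=> w [t [n [Bk hn nn0 hO [Ci CO Cmax]]]].
exists w, t; split.
- by split; [exact: Bk | exists n].
- exact: (k_unit hn nn0).
- by apply: (k_unit (t := w) (n := n)) => //; rewrite kC.
- exact: hO.
- by split; [exact: Ci | exact: CO | exact: Cmax].
Qed.
End Transfer.

Theorem proposition2p5 (k : falgType rat) (O : k -> Prop) (f : nat) :
  @etale_cubic k ->
  cubic_ring O ->
  subset_k O (@maximal_order k) ->
  index_is (@maximal_order k) O f ->
  squarefree f ->
  exists w t : k,
    [/\ normalized_basis (@maximal_order k) w t,
        w \is a GRing.unit, t \is a GRing.unit,
        eq_kset O (zspan3 1 (f%:R * w) t)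
      & is_conductor (@maximal_order k) O (zspan3 f%:R (f%:R * w) t)].
Proof.
move=> [kC _ hred]; exact: (@prop_sec k kC O f hred).
Qed.
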